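(* Let $(W,\odot,\mathbb{1})$ be a monoid and let $(M,+,\mathbb{0},\otimes)$ be an $\omega$-bicontinuous (left) $W$-module. Then for every $W$-wgcl program $C$ and every postweighting $f\in\mathrm{Wt}=M^\Sigma$, $$\mathrm{wlp}[\![C]\!](f)=\mathrm{wp}[\![C]\!](f)+\mathrm{wlp}[\![C]\!](\mathbb{0}),$$ where $\mathbb{0}$ is the constant-$\mathbb{0}$ weighting.
   Context: A (left) module over a monoid $(W,\odot,\mathbb{1})$ is a commutative monoid $(M,+,\mathbb{0})$ with an action $\otimes\colon W\times M\to M$ such that $(v\odot w)\otimes a=v\otimes(w\otimes a)$, $v\otimes(a+b)=(v\otimes a)+(v\otimes b)$, $\mathbb{1}\otimes a=a$, $v\otimes\mathbb{0}=\mathbb{0}$. The natural order is $a\preceq b$ iff $\exists c\colon a+c=b$. $M$ is $\omega$-bicontinuous if $\preceq$ is a partial order, $M$ has a greatest element $\top$, every increasing $\omega$-chain has a supremum and every decreasing $\omega$-chain has an infimum, and addition (in each argument) and, for each fixed $w\in W$, the map $a\mapsto w\otimes a$ preserve both suprema of increasing $\omega$-chains and infima of decreasing $\omega$-chains. States, programs: $\Sigma$ is the set of states (maps from variables to values); expressions $E$ evaluate to $E(\sigma)$; guards $\varphi$ are predicates on states. $W$-wgcl programs: $C::= x:=E \mid C;C \mid \mathtt{if}(\varphi)\{C\}\mathtt{else}\{C\} \mid \{C\}\oplus\{C\} \mid \mathtt{weight}\ a\ (a\in W) \mid \mathtt{while}(\varphi)\{C\}$. Weightings $\mathrm{Wt}=M^\Sigma$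 with pointwise operations and order; $([\varphi]\cdot f)(\sigma)=f(\sigma)$ if $\sigma\models\varphi$ else $\mathbb{0}$; $f[x/E](\sigma)=f(\sigma[x\mapsto E(\sigma)])$. For $T\in\{\mathrm{wp},\mathrm{wlp}\}$: $T[\![x:=E]\!](f)=f[x/E]$; $T[\![C_1;C_2]\!](f)=T[\![C_1]\!](T[\![C_2]\!](f))$; $T[\![\mathtt{if}(\varphi)\{C_1\}\mathtt{else}\{C_2\}]\!](f)=[\varphi]\cdot T[\![C_1]\!](f)+[\neg\varphi]\cdot T[\![C_2]\!](f)$; $T[\![\{C_1\}\oplus\{C_2\}]\!](f)=T[\![C_1]\!](f)+T[\![C_2]\!](f)$; $T[\![\mathtt{weight}\ a]\!](f)=a\otimes f$; $T[\![\mathtt{while}(\varphi)\{C'\}]\!](f)$ is the least fixed point (for $T=\mathrm{wp}$), resp. greatest fixed point (for $T=\mathrm{wlp}$), w.r.t. $\preceq$ of $X\mapsto[\neg\varphi]\cdot f+[\varphi]\cdot T[\![C']\!](X)$. *)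

(* Defs.v *)
From Stdlib Require Import ClassicalEpsilon.

Set Implicit Arguments.

Definition is_monoid (W : Type) (mul : W -> W -> W) (one : W) : Prop :=
  (forall u v w, mul (mul u v) w = mul u (mul v w)) /\
  (forall w, mul one w = w) /\
  (forall w, mul w one = w).

Definition is_comm_monoid (M : Type) (add : M -> M -> M) (zero : M) : Prop :=
  (forall a b c, add (add a b) c = add a (add b c)) /\
  (forall a b, add a b = add b a) /\
  (forall a, add zero a = a).

Definition is_left_module (W M : Type) (mul : W -> W -> W) (one : W)
  (add : M -> M -> M) (zero : M) (act : W -> M -> M) : Prop :=
  is_comm_monoid add zero /\
  (forall v w a, act (mul v w) a = act v (act w a)) /\
  (forall v a b, act v (add a b) = add (act v a) (act v b)) /\
  (forall a, act one a = a) /\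
  (forall v, act v zero = zero).

Definition nat_le (M : Type) (add : M -> M -> M) (a b : M) : Prop :=
  exists c, add a c = b.

Section Order.
Variables (A : Type) (le : A -> A -> Prop).

Definition is_partial_order : Prop :=
  (forall a, le a a) /\
  (forall a b c, le a b -> le b c -> le a c) /\
  (forall a b, le a b -> le b a -> a = b).

Definition increasing_chain (c : nat -> A) : Prop := forall n, le (c n) (c (S n)).
Definition decreasing_chain (c : nat -> A) : Prop := forall n, le (c (S n)) (c n).

Definition is_sup (c : nat -> A) (s : A) : Prop :=
  (forall n, le (c n) s) /\ (forall u, (forall n, le (c n) u) -> le s u).
Definition is_inf (c : nat -> A) (s : A) : Prop :=
  (forall n, le s (c n)) /\ (forall l, (forall n, le l (c n)) -> le l s).

Definition is_lfp (F : A -> A) (x : A) : Prop :=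
  F x = x /\ (forall y, F y = y -> le x y).
Definition is_gfp (F : A -> A) (x : A) : Prop :=
  F x = x /\ (forall y, F y = y -> le y x).
End Order.

Definition omega_bicont_map (M : Type) (le : M -> M -> Prop) (g : M -> M) : Prop :=
  (forall c s, increasing_chain le c -> is_sup le c s -> is_sup le (fun n => g (c n)) (g s)) /\
  (forall c s, decreasing_chain le c -> is_inf le c s -> is_inf le (fun n => g (c n)) (g s)).

Definition omega_bicontinuous (W M : Type) (add : M -> M -> M) (act : W -> M -> M) : Prop :=
  let le := nat_le add in
  is_partial_order le /\
  (exists top, forall a, le a top) /\
  (forall c, increasing_chain le c -> exists s, is_sup le c s) /\
  (forall c, decreasing_chain le c -> exists s, is_inf le c s) /\
  (forall b, omega_bicont_map le (fun a => add a b)) /\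
  (forall b, omega_bicont_map le (fun a => add b a)) /\
  (forall w, omega_bicont_map le (act w)).

Section Programs.
Variables (W Var Val : Type).

Definition state := Var -> Val.

Inductive prog : Type :=
| Assign : Var -> (state -> Val) -> prog
| Seq : prog -> prog -> prog
| Ite : (state -> bool) -> prog -> prog -> prog
| Choice : prog -> prog -> prog
| Weight : W -> prog
| While : (state -> bool) -> prog -> prog.
End Programs.

Arguments Assign {W Var Val}.
Arguments Seq {W Var Val}.
Arguments Ite {W Var Val}.
Arguments Choice {W Var Val}.
Arguments Weight {W Var Val}.
Arguments While {W Var Val}.

Section Transformers.
Variables (W M Var Val : Type).
Variable var_eq_dec : forall x y : Var, {x = y} + {x <> y}.
Variables (add : M -> M -> M) (zero : M) (act : W -> M -> M).

Definition weighting := state Var Val -> M.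

Definition wt_add (f g : weighting) : weighting := fun s => add (f s) (g s).
Definition wt_zero : weighting := fun _ => zero.
Definition wt_act (a : W) (f : weighting) : weighting := fun s => act a (f s).
Definition wt_le (f g : weighting) : Prop := forall s, nat_le add (f s) (g s).
Definition iverson (phi : state Var Val -> bool) (f : weighting) : weighting :=
  fun s => if phi s then f s else zero.

Definition upd (s : state Var Val) (x : Var) (v : Val) : state Var Val :=
  fun y => if var_eq_dec y x then v else s y.
Definition subst (f : weighting) (x : Var) (E : state Var Val -> Val) : weighting :=
  fun s => f (upd s x (E s)).

(* the least / greatest fixed point (w.r.t. the pointwise order), chosen by
   classical description; it is unique whenever it exists *)
Definition lfp (F : weighting -> weighting) : weighting :=
  epsilon (inhabits wt_zero) (is_lfp wt_le F).
Definition gfp (F : weighting -> weighting) : weighting :=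
  epsilon (inhabits wt_zero) (is_gfp wt_le F).

Fixpoint wT (liberal : bool) (C : prog W Var Val) (f : weighting) : weighting :=
  match C with
  | Assign x E => subst f x E
  | Seq C1 C2 => wT liberal C1 (wT liberal C2 f)
  | Ite phi C1 C2 =>
      wt_add (iverson phi (wT liberal C1 f))
             (iverson (fun s => negb (phi s)) (wT liberal C2 f))
  | Choice C1 C2 => wt_add (wT liberal C1 f) (wT liberal C2 f)
  | Weight a => wt_act a f
  | While phi C' =>
      let Phi := fun X => wt_add (iverson (fun s => negb (phi s)) f)
                                 (iverson phi (wT liberal C' X)) in
      if liberal then gfp Phi else lfp Phi
  end.

Definition wp := wT false.
Definition wlp := wT true.
End Transformers.

(* Main.v *)
Require Import Defs.
From Stdlib Require Import ClassicalEpsilon FunctionalExtensionality Lia Arith.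
Set Implicit Arguments.

Section AbsOrder.
Variables (A : Type) (R : A -> A -> Prop).
Hypothesis po : is_partial_order R.

Lemma R_refl a : R a a. Proof. apply po. Qed.
Lemma R_trans a b c : R a b -> R b c -> R a c. Proof. apply po. Qed.
Lemma R_anti a b : R a b -> R b a -> a = b. Proof. apply po. Qed.

Lemma chain_mono c : increasing_chain R c -> forall n m, n <= m -> R (c n) (c m).
Proof. intros Hc n m H; induction H. apply R_refl. eapply R_trans; eauto. Qed.

Lemma sup_unique c s t : is_sup R c s -> is_sup R c t -> s = t.
Proof. intros [H1 H2] [H3 H4]. apply R_anti; auto. Qed.

Lemma sup_const a : is_sup R (fun _ => a) a.
Proof. split; [intros; apply R_refl | intros u H; apply (H 0)]. Qed.

Lemma const_chain a : increasing_chain R (fun _ => a).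
Proof. intro; apply R_refl. Qed.

Definition monoR (F : A -> A) := forall x y, R x y -> R (F x) (F y).
Definition contR (F : A -> A) := forall c s, increasing_chain R c -> is_sup R c s ->
   is_sup R (fun n => F (c n)) (F s).

Lemma sup_shift c s : increasing_chain R c -> is_sup R (fun n => c (S n)) s -> is_sup R c s.
Proof. intros Hc [H1 H2]. split.
 - intros [|n]. eapply R_trans; [apply Hc| apply H1]. apply H1.
 - intros u Hu. apply H2. intros n; apply Hu. Qed.

Lemma kleene (bot : A) (F : A -> A) :
  (forall a, R bot a) -> monoR F -> contR F ->
  (forall c, increasing_chain R c -> exists s, is_sup R c s) ->
  exists s, increasing_chain R (fun n => Nat.iter n F bot) /\
   is_sup R (fun n => Nat.iter n F bot) s /\ F s = s /\ (forall y, R (F y) y -> R s y).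
Proof.
  intros Hbot Hm Hc Hex.
  assert (Hch : increasing_chain R (fun n => Nat.iter n F bot)).
  { intro n; induction n; simpl. apply Hbot. apply Hm. exact IHn. }
  destruct (Hex _ Hch) as [s Hs]. exists s. split; [|split; [|split]]; auto.
  - pose proof (Hc _ _ Hch Hs) as H1.
    apply (sup_unique (c := fun n => Nat.iter n F bot)); auto.
    apply sup_shift; auto.
  - intros y Hy. destruct Hs as [_ Hs]. apply Hs. intro n. induction n; simpl. apply Hbot.
    eapply R_trans; [apply Hm; exact IHn| exact Hy].
Qed.

Lemma lfp_unique F x y : is_lfp R F x -> is_lfp R F y -> x = y.
Proof. intros [H1 H2] [H3 H4]. apply R_anti; auto. Qed.

Lemma eps_lfp (i : inhabited A) F x : is_lfp R F x -> epsilon i (is_lfp R F) = x.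
Proof. intros H. apply (lfp_unique (F:=F)); auto. apply epsilon_spec. eauto. Qed.

End AbsOrder.

Section MLevel.
Variables (W M : Type) (mul : W -> W -> W) (one : W)
  (add : M -> M -> M) (zero : M) (act : W -> M -> M).
Hypothesis HM : is_left_module mul one add zero act.
Hypothesis Hbi : omega_bicontinuous add act.

Lemma addA a b c : add (add a b) c = add a (add b c). Proof. apply HM. Qed.
Lemma addC a b : add a b = add b a. Proof. apply HM. Qed.
Lemma add0 a : add zero a = a. Proof. apply HM. Qed.
Lemma addr0 a : add a zero = a. Proof. rewrite addC; apply add0. Qed.
Lemma addCA a b c : add a (add b c) = add b (add a c).
Proof. rewrite <- !addA, (addC a b); reflexivity. Qed.
Lemma addACA a b c d : add (add a b) (add c d) = add (add a c) (add b d).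
Proof. rewrite !addA, (addCA b c d); reflexivity. Qed.
Lemma actD v a b : act v (add a b) = add (act v a) (act v b). Proof. apply HM. Qed.
Lemma act0 v : act v zero = zero. Proof. apply HM. Qed.

Definition OK (R : M -> M -> Prop) : Prop :=
  is_partial_order R /\ (exists b, forall a, R b a) /\
  (forall c, increasing_chain R c -> exists s, is_sup R c s) /\
  (forall a a' b b', R a a' -> R b b' -> R (add a b) (add a' b')) /\
  (forall b, contR R (fun a => add a b)) /\ (forall b, contR R (add b)) /\
  (forall w a b, R a b -> R (act w a) (act w b)) /\ (forall w, contR R (act w)).

Lemma le_add_mono a a' b b' : nat_le add a a' -> nat_le add b b' ->
   nat_le add (add a b) (add a' b').
Proof. intros [c <-] [d <-]. exists (add c d). apply addACA. Qed.

Lemma le_act_mono w a b : nat_le add a b -> nat_le add (act w a) (act w b).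
Proof. intros [c <-]. exists (act w c). symmetry; apply actD. Qed.

Lemma OK_le : OK (nat_le add).
Proof.
  destruct Hbi as (Hpo & _ & Hsup & _ & Hl & Hr & Ha).
  split; [exact Hpo|split; [|split; [exact Hsup|split; [|split; [|split; [|split]]]]]].
  - exists zero. intro a. exists a. apply add0.
  - apply le_add_mono.
  - intro b. exact (proj1 (Hl b)).
  - intro b. exact (proj1 (Hr b)).
  - apply le_act_mono.
  - intro w. exact (proj1 (Ha w)).
Qed.

Lemma OK_ge : OK (fun a b => nat_le add b a).
Proof.
  destruct Hbi as (Hpo & [top Htop] & _ & Hinf & Hl & Hr & Ha).
  destruct Hpo as (Hrf & Htr & Han).
  split; [|split; [|split; [exact Hinf|split; [|split; [|split; [|split]]]]]].
  - split; [|split]; eauto.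
  - exists top. exact Htop.
  - intros; apply le_add_mono; auto.
  - intro b. exact (proj2 (Hl b)).
  - intro b. exact (proj2 (Hr b)).
  - intros; apply le_act_mono; auto.
  - intro w. exact (proj2 (Ha w)).
Qed.

Variables (Var Val : Type) (var_eq_dec : forall x y : Var, {x = y} + {x <> y}).
Notation St := (state Var Val).
Notation Wt := (weighting M Var Val).

Section WLevel.
Variable R : M -> M -> Prop.
Hypothesis HR : OK R.

Definition WR (f g : Wt) : Prop := forall s, R (f s) (g s).

Lemma Rpo : is_partial_order R. Proof. apply HR. Qed.
Lemma Rsup c : increasing_chain R c -> exists s, is_sup R c s. Proof. apply HR. Qed.
Lemma Radd a a' b b' : R a a' -> R b b' -> R (add a b) (add a' b'). Proof. apply HR. Qed.
Lemma Raddl b : contR R (fun a => add a b). Proof. apply HR. Qed.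
Lemma Raddr b : contR R (add b). Proof. apply HR. Qed.
Lemma Ract w a b : R a b -> R (act w a) (act w b). Proof. apply HR. Qed.
Lemma Ractc w : contR R (act w). Proof. apply HR. Qed.

Lemma WRpo : is_partial_order WR.
Proof.
  split; [|split].
  - intros f s; apply (R_refl Rpo).
  - intros f g h H1 H2 s; eapply (R_trans Rpo); eauto.
  - intros f g H1 H2; extensionality s; apply (R_anti Rpo); auto.
Qed.

Lemma wbot : exists b : Wt, forall f, WR b f.
Proof. destruct HR as (_ & [b Hb] & _). exists (fun _ => b). intros f s; apply Hb. Qed.

Lemma chain_pt c : increasing_chain WR c -> forall s, increasing_chain R (fun n => c n s).
Proof. intros H s n; apply H. Qed.

Lemma sup_of_pt c f : (forall s, is_sup R (fun n => c n s) (f s)) -> is_sup WR c f.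
Proof.
  intros H; split.
  - intros n s; apply H.
  - intros u Hu s; apply H; intro n; apply Hu.
Qed.

Lemma pt_sup_ex c : increasing_chain WR c -> exists f, forall s, is_sup R (fun n => c n s) (f s).
Proof.
  intros Hc.
  assert (E : forall s, exists p, is_sup R (fun n => c n s) p).
  { intro s; apply Rsup; apply chain_pt; auto. }
  exists (fun s => epsilon (inhabits (c 0 s)) (fun p => is_sup R (fun n => c n s) p)).
  intro s. apply epsilon_spec. apply E.
Qed.

Lemma Wsup_ex c : increasing_chain WR c -> exists f, is_sup WR c f.
Proof. intros Hc; destruct (pt_sup_ex Hc) as [f Hf]; exists f; apply sup_of_pt; auto. Qed.

Lemma pt_of_sup c f : increasing_chain WR c -> is_sup WR c f ->
  forall s, is_sup R (fun n => c n s) (f s).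
Proof.
  intros Hc Hf. destruct (pt_sup_ex Hc) as [p Hp].
  assert (f = p). { apply (sup_unique WRpo Hf). apply sup_of_pt; auto. }
  subst; auto.
Qed.

Lemma add2 c d s t : increasing_chain R c -> increasing_chain R d -> is_sup R c s ->
  is_sup R d t -> is_sup R (fun n => add (c n) (d n)) (add s t).
Proof.
  intros Hc Hd Hs Ht. split.
  - intro n. apply Radd; [apply Hs | apply Ht].
  - intros u Hu.
    assert (H1: forall m, R (add s (d m)) u).
    { intro m. destruct (Raddl (d m) Hc Hs) as [_ H]. apply H. intro n.
      eapply (R_trans Rpo); [| apply (Hu (max n m))].
      apply Radd; apply (chain_mono Rpo); auto; lia. }
    destruct (Raddr s Hd Ht) as [_ H]. apply H. exact H1.
Qed.

Lemma wadd_mono f f' g g' : WR f f' -> WR g g' -> WR (wt_add add f g) (wt_add add f' g').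
Proof. intros H1 H2 s; apply Radd; auto. Qed.

Lemma wadd_chain c d : increasing_chain WR c -> increasing_chain WR d ->
  increasing_chain WR (fun n => wt_add add (c n) (d n)).
Proof. intros H1 H2 n; apply wadd_mono; auto. Qed.

Lemma wadd2 c d s t : increasing_chain WR c -> increasing_chain WR d -> is_sup WR c s ->
  is_sup WR d t -> is_sup WR (fun n => wt_add add (c n) (d n)) (wt_add add s t).
Proof.
  intros Hc Hd Hs Ht. apply sup_of_pt. intro x. unfold wt_add.
  apply add2; try apply chain_pt; auto; apply pt_of_sup; auto.
Qed.

Lemma iv_mono phi f g : WR f g -> WR (iverson zero phi f) (iverson zero phi g).
Proof. intros H s; unfold iverson; destruct (phi s); auto. apply (R_refl Rpo). Qed.

Lemma iv_chain phi c : increasing_chain WR c -> increasing_chain WR (fun n => iverson zero phi (c n)).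
Proof. intros H n; apply iv_mono; auto. Qed.

Lemma iv_cont phi c f : increasing_chain WR c -> is_sup WR c f ->
  is_sup WR (fun n => iverson zero phi (c n)) (iverson zero phi f).
Proof.
  intros Hc Hf. apply sup_of_pt. intro s. unfold iverson. destruct (phi s).
  - apply pt_of_sup; auto.
  - apply (sup_const Rpo).
Qed.

Lemma act_mono' a f g : WR f g -> WR (wt_act act a f) (wt_act act a g).
Proof. intros H s; apply Ract; auto. Qed.

Lemma act_cont a c f : increasing_chain WR c -> is_sup WR c f ->
  is_sup WR (fun n => wt_act act a (c n)) (wt_act act a f).
Proof.
  intros Hc Hf. apply sup_of_pt. intro s. unfold wt_act.
  apply (Ractc a). apply chain_pt; auto. apply pt_of_sup; auto.
Qed.

Lemma subst_mono x E f g : WR f g -> WR (subst var_eq_dec f x E) (subst var_eq_dec g x E).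
Proof. intros H s; apply H. Qed.

Lemma subst_cont x E c f : increasing_chain WR c -> is_sup WR c f ->
  is_sup WR (fun n => subst var_eq_dec (c n) x E) (subst var_eq_dec f x E).
Proof.
  intros Hc Hf. apply sup_of_pt. intro s. unfold subst. apply pt_of_sup; auto.
Qed.

Section While.
Variables (phi : St -> bool) (T : Wt -> Wt).
Hypothesis Tm : monoR WR T.
Hypothesis Tc : contR WR T.

Definition Phi (f X : Wt) : Wt :=
  wt_add add (iverson zero (fun s => negb (phi s)) f) (iverson zero phi (T X)).
Definition Wfix (f : Wt) : Wt := epsilon (inhabits (wt_zero zero)) (is_lfp WR (Phi f)).

Lemma Phi_mono f f' X X' : WR f f' -> WR X X' -> WR (Phi f X) (Phi f' X').
Proof. intros H1 H2. apply wadd_mono; apply iv_mono; auto. Qed.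

Lemma Phi_cont f : contR WR (Phi f).
Proof.
  intros c s Hc Hs. unfold Phi.
  assert (Hch : increasing_chain WR (fun n => T (c n))). { intro n; apply Tm; apply Hc. }
  apply (wadd2 (c := fun _ => _)).
  - apply (const_chain WRpo).
  - apply iv_chain; auto.
  - apply (sup_const WRpo).
  - apply iv_cont; auto.
Qed.

Lemma Wfix_spec b (Hb : forall a, WR b a) f :
  increasing_chain WR (fun n => Nat.iter n (Phi f) b) /\
  is_sup WR (fun n => Nat.iter n (Phi f) b) (Wfix f) /\
  Phi f (Wfix f) = Wfix f /\ (forall y, WR (Phi f y) y -> WR (Wfix f) y).
Proof.
  destruct (@kleene _ _ WRpo b (Phi f) Hb) as (s & H1 & H2 & H3 & H4).
  - intros X Y H; apply Phi_mono; auto. intro; apply (R_refl Rpo).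
  - apply Phi_cont.
  - apply Wsup_ex.
  - assert (E : Wfix f = s).
    { apply (eps_lfp WRpo). split; auto. intros y Hy. apply H4. rewrite Hy.
      apply (R_refl WRpo). }
    rewrite E; auto.
Qed.

Lemma Wfix_mono : monoR WR Wfix.
Proof.
  intros f g H. destruct wbot as [b Hb].
  destruct (Wfix_spec Hb f) as (_ & _ & _ & Hf).
  destruct (Wfix_spec Hb g) as (_ & _ & Hg & _).
  apply Hf. rewrite <- Hg at 2. apply Phi_mono; auto. apply (R_refl WRpo).
Qed.

Lemma iter_mono b f g : WR f g -> forall n, WR (Nat.iter n (Phi f) b) (Nat.iter n (Phi g) b).
Proof.
  intros H n; induction n; simpl. apply (R_refl WRpo). apply Phi_mono; auto.
Qed.

Lemma Wfix_cont : contR WR Wfix.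
Proof.
  intros c F Hc HF. destruct wbot as [b Hb].
  assert (Hn : forall n, increasing_chain WR (fun k => Nat.iter n (Phi (c k)) b) /\
     is_sup WR (fun k => Nat.iter n (Phi (c k)) b) (Nat.iter n (Phi F) b)).
  { intro n; induction n as [|n [IH1 IH2]]; simpl.
    - split. apply (const_chain WRpo). apply (sup_const WRpo).
    - split.
      + intro k. apply Phi_mono. apply Hc. apply iter_mono. apply Hc.
      + unfold Phi. apply wadd2.
        * apply iv_chain; auto.
        * apply iv_chain. intro k; apply Tm; apply IH1.
        * apply iv_cont; auto.
        * apply iv_cont. intro k; apply Tm; apply IH1. apply Tc; auto. }
  split.
  - intro k. apply Wfix_mono. apply HF.
  - intros u Hu. destruct (Wfix_spec Hb F) as (_ & [_ HS] & _).
    apply HS. intro n. destruct (Hn n) as [_ [_ Hl]]. apply Hl. intro k.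
    eapply (R_trans WRpo); [| apply (Hu k)].
    destruct (Wfix_spec Hb (c k)) as (_ & [HU _] & _). apply HU.
Qed.
End While.

End WLevel.
Definition Rl (l : bool) : M -> M -> Prop := if l then (fun a b => nat_le add b a) else nat_le add.
Lemma OK_Rl l : OK (Rl l).
Proof. destruct l; [apply OK_ge | apply OK_le]. Qed.

Notation wTl := (wT var_eq_dec add zero act).

Lemma wT_while l phi C :
  wTl l (While phi C) = Wfix (Rl l) phi (wTl l C).
Proof. extensionality f; destruct l; reflexivity. Qed.

Lemma prog_mc l C : monoR (WR (Rl l)) (wTl l C) /\ contR (WR (Rl l)) (wTl l C).
Proof.
  pose proof (OK_Rl l) as HR.
  induction C as [x E|C1 [IH1m IH1c] C2 [IH2m IH2c]|phi C1 [IH1m IH1c] C2 [IH2m IH2c]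
     |C1 [IH1m IH1c] C2 [IH2m IH2c]|a|phi C [IHm IHc]].
  - split; intros ? ? ?; simpl. apply subst_mono; auto. intros; apply subst_cont; auto.
  - split.
    + intros f g H; simpl. apply IH1m, IH2m, H.
    + intros c s Hc Hs; simpl. apply IH1c. intro n; apply IH2m, Hc. apply IH2c; auto.
  - split.
    + intros f g H; simpl. apply (wadd_mono HR); apply iv_mono; auto.
    + intros c s Hc Hs; simpl.
      assert (H1 : increasing_chain (WR (Rl l)) (fun n => wTl l C1 (c n))) by (intro n; apply IH1m, Hc).
      assert (H2 : increasing_chain (WR (Rl l)) (fun n => wTl l C2 (c n))) by (intro n; apply IH2m, Hc).
      apply (wadd2 HR); try apply iv_chain; auto; apply iv_cont; auto.
  - split.
    + intros f g H; simpl. apply (wadd_mono HR); auto.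
    + intros c s Hc Hs; simpl.
      assert (H1 : increasing_chain (WR (Rl l)) (fun n => wTl l C1 (c n))) by (intro n; apply IH1m, Hc).
      assert (H2 : increasing_chain (WR (Rl l)) (fun n => wTl l C2 (c n))) by (intro n; apply IH2m, Hc).
      apply (wadd2 HR); auto.
  - split.
    + intros f g H; simpl. apply (act_mono' HR); auto.
    + intros c s Hc Hs; simpl. apply (act_cont HR); auto.
  - rewrite wT_while. split.
    + apply (Wfix_mono HR); auto.
    + apply (Wfix_cont HR); auto.
Qed.

Lemma zero_bot : forall a : Wt, WR (Rl false) (wt_zero zero) a.
Proof. intros a s. exists (a s). apply add0. Qed.

Lemma wp_add C (f g : Wt) : wTl false C (wt_add add f g) = wt_add add (wTl false C f) (wTl false C g).
Proof.
  revert f g.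
  induction C as [x E|C1 IH1 C2 IH2|phi C1 IH1 C2 IH2|C1 IH1 C2 IH2|a|phi C IH]; intros f g.
  - reflexivity.
  - simpl. rewrite IH2, IH1. reflexivity.
  - simpl. rewrite IH1, IH2. extensionality s. unfold wt_add, iverson.
    destruct (phi s); simpl; rewrite ?addr0, ?add0; reflexivity.
  - simpl. rewrite IH1, IH2. extensionality s. unfold wt_add. apply addACA.
  - simpl. extensionality s. unfold wt_act, wt_add. apply actD.
  - rewrite wT_while.
    pose proof (OK_Rl false) as HR. destruct (prog_mc false C) as [Hm Hc].
    assert (Hit : forall n, Nat.iter n (Phi phi (wTl false C) (wt_add add f g)) (wt_zero zero) =
       wt_add add (Nat.iter n (Phi phi (wTl false C) f) (wt_zero zero))
                  (Nat.iter n (Phi phi (wTl false C) g) (wt_zero zero))).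
    { intro n; induction n as [|n IHn]; simpl.
      - extensionality s. unfold wt_add, wt_zero. symmetry; apply add0.
      - rewrite IHn. unfold Phi at 1. rewrite IH. unfold Phi.
        extensionality s. unfold wt_add, iverson. destruct (phi s); simpl.
        + rewrite !add0. reflexivity.
        + rewrite !addr0. reflexivity. }
    destruct (Wfix_spec HR phi Hm Hc zero_bot (wt_add add f g)) as (_ & H1 & _).
    destruct (Wfix_spec HR phi Hm Hc zero_bot f) as (Cf & H2 & _).
    destruct (Wfix_spec HR phi Hm Hc zero_bot g) as (Cg & H3 & _).
    apply (sup_unique (WRpo HR) H1).
    rewrite (functional_extensionality _ _ Hit).
    apply (wadd2 HR); auto.
Qed.

Lemma top_bot : exists top : Wt, forall a : Wt, WR (Rl true) top a.
Proof.
  destruct Hbi as (_ & [top Htop] & _). exists (fun _ => top). intros a s. apply Htop.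
Qed.

Lemma main C (f : Wt) :
  wTl true C f = wt_add add (wTl false C f) (wTl true C (wt_zero zero)).
Proof.
  revert f.
  induction C as [x E|C1 IH1 C2 IH2|phi C1 IH1 C2 IH2|C1 IH1 C2 IH2|a|phi C IH]; intros f.
  - extensionality s. unfold subst, wt_add, wt_zero. simpl. rewrite addr0. reflexivity.
  - simpl. rewrite (IH2 f), (IH1 (wt_add add _ _)), wp_add.
    rewrite (IH1 (wTl true C2 (wt_zero zero))).
    extensionality s. unfold wt_add. apply addA.
  - simpl. rewrite (IH1 f), (IH2 f). extensionality s. unfold wt_add, iverson.
    destruct (phi s); simpl; rewrite ?addr0, ?add0; reflexivity.
  - simpl. rewrite (IH1 f), (IH2 f). extensionality s. unfold wt_add. apply addACA.
  - simpl. extensionality s. unfold wt_act, wt_add, wt_zero. rewrite act0, addr0. reflexivity.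
  - rewrite !wT_while.
    pose proof (OK_Rl false) as HR0. pose proof (OK_Rl true) as HR1.
    destruct (prog_mc false C) as [Hm0 Hc0].
    destruct (prog_mc true C) as [Hm1 Hc1].
    set (Fp := wTl false C) in *. set (Fl := wTl true C) in *.
    assert (Hstep : forall (g A B : Wt), Phi phi Fl g (wt_add add A B) =
       wt_add add (Phi phi Fp g A) (Phi phi Fl (wt_zero zero) B)).
    { intros g A B. unfold Phi, Fp, Fl in *. rewrite (IH (wt_add add A B)), wp_add, (IH B).
      extensionality s. unfold wt_add, iverson, wt_zero. destruct (phi s); simpl.
      + rewrite !add0, addA. reflexivity.
      + rewrite !addr0. reflexivity. }
    destruct (Wfix_spec HR0 phi Hm0 Hc0 zero_bot f) as (ChL & SupL & FixL & _).
    destruct top_bot as [top Htop].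
    destruct (Wfix_spec HR1 phi Hm1 Hc1 Htop (wt_zero zero)) as (ChG & SupG & FixG & _).
    set (L := Wfix (Rl false) phi Fp f) in *.
    set (G := Wfix (Rl true) phi Fl (wt_zero zero)) in *.
    unfold Wfix at 1. apply (eps_lfp (WRpo HR1)). split.
    + rewrite Hstep, FixL, FixG. reflexivity.
    + intros y Hy.
      assert (Hit : forall n X, Nat.iter n (Phi phi Fl f) X =
        wt_add add (Nat.iter n (Phi phi Fp f) (wt_zero zero))
                   (Nat.iter n (Phi phi Fl (wt_zero zero)) X)).
      { intros n X; induction n as [|n IHn]; simpl.
        - extensionality s. unfold wt_add, wt_zero. symmetry; apply add0.
        - rewrite IHn. apply Hstep. }
      assert (Hyn : forall n, y = Nat.iter n (Phi phi Fl f) y).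
      { intro n; induction n as [|n IHn]; simpl. reflexivity. rewrite <- IHn. symmetry; exact Hy. }
      assert (Hmono : forall n, WR (Rl true) (Nat.iter n (Phi phi Fl (wt_zero zero)) top)
                                        (Nat.iter n (Phi phi Fl (wt_zero zero)) y)).
      { intro n; induction n as [|n IHn]; simpl. apply Htop.
        apply (Phi_mono HR1); auto. apply (R_refl (WRpo HR1)). }
      intro s.
      assert (HinfG := pt_of_sup HR1 ChG SupG s).
      destruct (Raddr HR1 (L s) (chain_pt ChG s) HinfG) as [_ Hglb].
      apply Hglb. intro n. simpl.
      rewrite (Hyn n), Hit. unfold wt_add.
      apply le_add_mono.
      * apply (pt_of_sup HR0 ChL SupL s).
      * apply Hmono.
Qed.

End MLevel.

Theorem mainTheorem5
  (W M Var Val : Type)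
  (var_eq_dec : forall x y : Var, {x = y} + {x <> y})
  (mul : W -> W -> W) (one : W)
  (add : M -> M -> M) (zero : M) (act : W -> M -> M)
  (HW : is_monoid mul one)
  (HM : is_left_module mul one add zero act)
  (Hbi : omega_bicontinuous add act)
  (C : prog W Var Val) (f : weighting M Var Val) :
  wlp var_eq_dec add zero act C f =
  wt_add add (wp var_eq_dec add zero act C f)
             (wlp var_eq_dec add zero act C (@wt_zero M Var Val zero)).
Proof.
  exact (main HM Hbi var_eq_dec C f).
Qed.
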